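(* Let $p\in[1,\infty)$, let $N\subseteq\mathbb{N}$ be nonempty, and let $M:=\{0\}\cup\{\tfrac1k e_{(k,\pm1)}:k\in N\}\cup\{\tfrac1k e_{(k,+1)}:k\in\mathbb{N}\setminus N\}\subseteq\ell^p$, with the metric induced by $\|\cdot\|_p$. Let $n\in\mathbb{N}$ with $n>1$, and let $C\subseteq M$ consist of $n$ points of $M$ of largest $\ell^p$ norm (i.e., $|C|=n$ and every point of $M\setminus C$ has norm at most the minimum norm of points of $C$). Then $C$ is an optimal code in $M$ and is unique up to isometry.
   Context: The standard basis of $\ell^p$ is indexed as $e_{(k,+1)}:=e_{2k-1}$ and $e_{(k,-1)}:=e_{2k}$ for $k\in\mathbb{N}$. $M$ is compact. An optimal code of size $n$ is an $n$-element subset of $M$ maximizing the minimum distance between distinct points; unique up to isometry means every optimal code of size $n$ is the image of $C$ under an isometry of $M$. *)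

(* Defs.v *)
From HB Require Import structures.
From mathcomp Require Import all_boot all_order all_algebra.
From mathcomp Require Import all_classical all_reals all_analysis.
Set Implicit Arguments. Unset Strict Implicit. Unset Printing Implicit Defensive.
Import Order.TTheory GRing.Theory Num.Theory.
Local Open Scope classical_set_scope.
Local Open Scope ring_scope.

Section Defs.
Variable R : realType.

(* real sequences indexed by nat; coordinate i of the sequence is the
   paper's coordinate i+1 *)
Definition seqR := nat -> R.

Definition lpnorm (p : R) (x : seqR) : R :=
  (limn (fun m : nat => \sum_(i < m) `|x i| `^ p)) `^ (p^-1).

Definition lpdist (p : R) (x y : seqR) : R := lpnorm p (fun i => x i - y i).

Definition ebasis (j : nat) : seqR := fun i => if i == j.-1 then 1 else 0.

(* e_{(k,+1)} := e_{2k-1},  e_{(k,-1)} := e_{2k} *)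
Definition eplus (k : nat) : seqR := ebasis (2 * k).-1.
Definition eminus (k : nat) : seqR := ebasis (2 * k).

Definition scaleseq (a : R) (x : seqR) : seqR := fun i => a * x i.

Definition zeroseq : seqR := fun _ => 0.

Definition Mset (N : set nat) : set seqR :=
  [set zeroseq]
  `|` [set scaleseq (k%:R)^-1 (eplus k) | k in N]
  `|` [set scaleseq (k%:R)^-1 (eminus k) | k in N]
  `|` [set scaleseq (k%:R)^-1 (eplus k) | k in [set k | (0 < k)%N /\ ~ N k]].

End Defs.

Section Codes.
Context {T : Type} {R : realType}.

Definition is_code (d : T -> T -> R) (M : set T) (n : nat) (C : set T) : Prop :=
  C `<=` M /\ exists f : 'I_n -> T, injective f /\ C = range f.

Definition min_dist (d : T -> T -> R) (C : set T) : R :=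
  inf [set r | exists x y, C x /\ C y /\ x <> y /\ r = d x y].

Definition optimal_code (d : T -> T -> R) (M : set T) (n : nat) (C : set T) : Prop :=
  is_code d M n C /\
  forall C', is_code d M n C' -> min_dist d C' <= min_dist d C.

Definition isometry_of (d : T -> T -> R) (M : set T) (f : T -> T) : Prop :=
  (forall x, M x -> M (f x)) /\
  (forall y, M y -> exists2 x, M x & f x = y) /\
  (forall x y, M x -> M y -> d (f x) (f y) = d x y).

Definition unique_up_to_isometry (d : T -> T -> R) (M : set T) (n : nat) (C : set T) : Prop :=
  forall C', optimal_code d M n C' ->
    exists f, isometry_of d M f /\ C' = f @` C.

End Codes.

(* Main.v *)
Require Import Defs.
From HB Require Import structures.
From mathcomp Require Import all_boot all_order all_algebra.
From mathcomp Require Import all_classical all_reals all_analysis.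
From mathcomp Require Import zify.
Import Order.TTheory GRing.Theory Num.Theory.
Import numFieldNormedType.Exports.
Local Open Scope classical_set_scope.
Local Open Scope ring_scope.

Section Fin.
Variable T : Type.

Lemma count_le n (f f' : 'I_n -> T) (A B : {set 'I_n}) : injective f' ->
  (forall i, i \in A -> exists j, j \in B /\ f j = f' i) -> (#|A| <= #|B|)%N.
Proof.
move=> inj H.
pose h i := if pselect (exists j, j \in B /\ f j = f' i) is left e
  then proj1_sig (cid e) else i.
have hP : forall i, i \in A -> h i \in B /\ f (h i) = f' i.
  move=> i iA; rewrite /h; case: pselect => [e|ne]; first exact: (proj2_sig (cid e)).
  by exfalso; apply: ne; apply: H.
rewrite -(@card_in_imset _ _ h A).
  by apply: subset_leq_card; apply/fintype.subsetP => _ /imsetP[i iA ->]; exact: (hP i iA).1.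
move=> i i' iA i'A e; apply: inj.
by rewrite -(hP i iA).2 -(hP i' i'A).2 e.
Qed.

Lemma fin_match n (f f' : 'I_n -> T) (i0 j0 : 'I_n) : injective f' ->
  (forall i, i != i0 -> exists j, j != j0 /\ f j = f' i) ->
  forall j, j != j0 -> exists i, i != i0 /\ f' i = f j.
Proof.
move=> inj H.
pose h i := if i == i0 then j0 else
  if pselect (exists j, j != j0 /\ f j = f' i) is left e
  then proj1_sig (cid e) else j0.
have hP : forall i, i != i0 -> h i != j0 /\ f (h i) = f' i.
  move=> i ii0; rewrite /h (negbTE ii0); case: pselect => [e|ne].
    exact: (proj2_sig (cid e)).
  by exfalso; apply: ne; apply: H.
have hinj : injective h.
  move=> i i'.
  case: (eqVneq i i0) => [->|ii0]; case: (eqVneq i' i0) => [->//|i'i0] e.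
  - by move: e; rewrite {1}/h eqxx => e; move: (hP i' i'i0).1; rewrite -e eqxx.
  - by move: e; rewrite {2}/h eqxx => e; move: (hP i ii0).1; rewrite e eqxx.
  - by apply: inj; rewrite -(hP i ii0).2 -(hP i' i'i0).2 e.
have [h' hh' h'h] := injF_bij hinj.
move=> j jj0; exists (h' j).
have ii0 : h' j != i0.
  by apply: contra jj0 => /eqP e; rewrite -(h'h j) e /h eqxx.
by split => //; rewrite -(hP _ ii0).2 h'h.
Qed.

End Fin.

Section Swap.
Variables (T : Type) (c0 u : T).
Definition swp (z : T) : T :=
  if pselect (z = c0) is left _ then u else if pselect (z = u) is left _ then c0 else z.
Lemma swp_c0 : swp c0 = u.
Proof. by rewrite /swp; case: pselect. Qed.
Lemma swp_u : c0 <> u -> swp u = c0.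
Proof. by move=> cu; rewrite /swp; case: pselect => [e|_]; [exfalso; apply: cu|case: pselect]. Qed.
Lemma swp_o z : z <> c0 -> z <> u -> swp z = z.
Proof. by move=> h1 h2; rewrite /swp; case: pselect => // _; case: pselect. Qed.
Lemma swp_cases z : (z = c0 /\ swp z = u) \/ (z = u /\ swp z = c0) \/ swp z = z.
Proof.
rewrite /swp; case: pselect => [->|_]; first by left.
by case: pselect => [->|_]; [right; left|right; right].
Qed.
Lemma swpK : c0 <> u -> forall z, swp (swp z) = z.
Proof.
move=> cu z; have [[-> ->]|[[-> ->]|e]] := swp_cases z.
- exact: swp_u.
- exact: swp_c0.
- by rewrite !e.
Qed.
End Swap.
Arguments swp {T}. Arguments swp_c0 {T}. Arguments swp_u {T}. Arguments swp_o {T}. Arguments swp_cases {T}. Arguments swpK {T}.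

Section Abs.
Variables (R : realType) (T : Type) (M : set T) (nu : T -> R)
  (d : T -> T -> R) (g : R -> R -> R).
Hypothesis Hd : forall x y, M x -> M y -> x <> y -> d x y = g (nu x) (nu y).
Hypothesis Hdd : forall x, M x -> d x x = 0.
Hypothesis Hd0 : forall x y, 0 <= d x y.
Hypothesis Hnu : forall x, M x -> 0 <= nu x.
Hypothesis Hgs : forall a b, g a b = g b a.
Hypothesis Hglt : forall a a' b, 0 <= a -> a < a' -> 0 <= b -> g a b < g a' b.
Hypothesis Hlev : forall x y z, M x -> M y -> M z -> nu x = nu z -> nu y = nu z ->
  x <> y -> z = x \/ z = y.

Lemma gle a a' b : 0 <= a -> a <= a' -> 0 <= b -> g a b <= g a' b.
Proof.
move=> a0; rewrite le_eqVlt => /orP[/eqP->//|aa'] b0; exact/ltW/Hglt.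
Qed.

Lemma gle2 a a' b b' : 0 <= a -> a <= a' -> 0 <= b -> b <= b' -> g a b <= g a' b'.
Proof.
move=> a0 aa' b0 bb'; apply: (@le_trans _ _ (g a' b)); first exact: gle.
by rewrite Hgs (Hgs a'); apply: gle => //; apply: le_trans aa'.
Qed.

Lemma glt2 a b b' : 0 <= a -> 0 <= b -> b < b' -> g a b < g a b'.
Proof. by move=> a0 b0 bb'; rewrite Hgs (Hgs a); apply: Hglt. Qed.

Lemma md_lb (S : set T) x y : S x -> S y -> x <> y -> min_dist d S <= d x y.
Proof.
move=> Sx Sy xy; apply: ge_inf; last by exists x, y.
by exists 0 => r [x' [y' [_ [_ [_ ->]]]]].
Qed.

Theorem abs_main n C : (1 < n)%N -> is_code d M n C ->
  (forall x c, M x -> ~ C x -> C c -> nu x <= nu c) ->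
  optimal_code d M n C /\ unique_up_to_isometry d M n C.
Proof.
move=> n1 [CM [f [injf Cf]]]; subst C => top.
have i00 : 'I_n := Ordinal (ltnW n1).
have [j0 _ Hj0] := @arg_minP _ _ 'I_n i00 predT (nu \o f) isT.
have : (0 < #|[set~ j0]%SET|)%N by rewrite cardsC1 card_ord; lia.
case/card_gt0P => k; rewrite in_setC1 => kj0.
have [j1 j1j0 Hj1] := @arg_minP _ _ 'I_n k (fun j => j != j0) (nu \o f) kj0.
rewrite /= in Hj0 Hj1.
set c0 := f j0; set c1 := f j1; set a := nu c0; set b := nu c1.
have Mf : forall j, M (f j) by move=> j; apply: CM; exists j.
have a0 : 0 <= a by exact: Hnu (Mf j0).
have ab : a <= b by apply: Hj0.
have b0 : 0 <= b by exact: le_trans a0 ab.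
have c01 : c0 <> c1 by move/injf => e; move: j1j0; rewrite e eqxx.
have outside : forall x, M x -> a < nu x -> range f x.
  move=> x Mx ax; case: (pselect (range f x)) => // nx.
  by have := top x c0 Mx nx (ex_intro2 _ _ j0 I erefl); rewrite leNgt ax.
have lbC : forall x y, range f x -> range f y -> x <> y -> g a b <= d x y.
  move=> _ _ [i _ <-] [i' _ <-] ne; rewrite Hd //.
  case: (eqVneq i j0) => [ei|ij0].
    have i'j0 : i' != j0 by apply/eqP => ei'; apply: ne; rewrite ei ei'.
    by rewrite ei; apply: gle2 => //; apply: Hj1.
  rewrite Hgs; apply: gle2 => //; [exact: Hj1|exact: Hj0].
have mdC : min_dist d (range f) = g a b.
  apply/le_anti/andP; split.
    rewrite -(@Hd _ _ (Mf j0) (Mf j1) c01); apply: md_lb => //; by [exists j0|exists j1].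
  apply: lb_le_inf; first by exists (d c0 c1), c0, c1; split; [exists j0|split; [exists j1|]].
  by move=> r [x [y [Cx [Cy [xy ->]]]]]; apply: lbC.
have K1 : forall f' : 'I_n -> T, injective f' -> range f' `<=` M ->
    exists i, nu (f' i) <= a.
  move=> f' injf' C'M; apply: contrapT => /forallNP H.
  have : (#|[set: 'I_n]%SET| <= #|[set~ j0]%SET|)%N.
    apply: (@count_le T n f f' _ _ injf') => i _.
    have Hi : a < nu (f' i) by rewrite ltNge; apply/negP/H.
    have [j _ ej] := outside _ (C'M _ (ex_intro2 _ _ i I erefl)) Hi.
    exists j; split => //; rewrite in_setC1; apply/eqP => ej0.
    by move: Hi; rewrite -ej ej0 ltxx.
  by rewrite cardsT cardsC1 card_ord; lia.
have K2 : forall f' : 'I_n -> T, injective f' -> range f' `<=` M ->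
    forall i, exists i', i' != i /\ nu (f' i') <= b.
  move=> f' injf' C'M i; apply: contrapT => /forallNP H.
  have : (#|[set~ i]%SET| <= #|(~: [set j0; j1])%SET|)%N.
    apply: (@count_le T n f f' _ _ injf') => i'; rewrite in_setC1 => i'i.
    have Hi : b < nu (f' i') by rewrite ltNge; apply/negP => hb; apply: (H i'); split.
    have [j _ ej] := outside _ (C'M _ (ex_intro2 _ _ i' I erefl)) (le_lt_trans ab Hi).
    exists j; split => //; rewrite !inE negb_or; apply/andP; split; apply/eqP => ej0.
      by move: Hi; rewrite -ej ej0 ltNge ab.
    by move: Hi; rewrite -ej ej0 ltxx.
  have e1 := cardsC [set j0; j1]%SET.
  have e2 : #|[set j0; j1]%SET| = 2%N by rewrite cards2 eq_sym j1j0.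
  have e3 := cardsC1 i; have e4 := card_ord n.
  move: e1 e3; rewrite e2 !card_ord; lia.
split.
  split; first by split => //; exists f.
  move=> C' [C'M [f' [injf' eC']]]; subst C'.
  have [i Hi] := K1 f' injf' C'M.
  have [i' [i'i Hi']] := K2 f' injf' C'M i.
  have ne : f' i' <> f' i by move/injf'/eqP; rewrite (negbTE i'i).
  have Mi : M (f' i) by apply: C'M; exists i.
  have Mi' : M (f' i') by apply: C'M; exists i'.
  rewrite mdC; apply: (@le_trans _ _ (d (f' i') (f' i))).
    by apply: md_lb.
  rewrite Hd // Hgs; apply: gle2 => //; exact: Hnu.
clear k kj0.
move=> C' [[C'M [f' [injf' eC']]] opt]; subst C'.
have Hge : g a b <= min_dist d (range f') by rewrite -mdC; apply: opt; split => //; exists f.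
have [i Hi] := K1 f' injf' C'M.
have [i' [i'i Hi']] := K2 f' injf' C'M i.
set u := f' i.
have Mu : M u by apply: C'M; exists i.
have Mf' : forall k0, M (f' k0) by move=> k0; apply: C'M; exists k0.
have u0 : 0 <= nu u by exact: Hnu.
have mdu : forall w, range f' w -> w <> u -> g a b <= d u w.
  move=> w Cw wu; apply: (le_trans Hge).
  by apply: (@md_lb (range f') u w (ex_intro2 _ _ i I erefl) Cw) => e; apply: wu.
have hu : nu u = a.
  apply/eqP; rewrite eq_le Hi /= leNgt; apply/negP => lt.
  have ne : f' i' <> u by move/injf'/eqP; rewrite (negbTE i'i).
  have := mdu _ (ex_intro2 _ _ i' I erefl) ne; rewrite Hd //; last by move=> e; apply: ne.
  apply/negP; rewrite -ltNge.
  apply: (@lt_le_trans _ _ (g a (nu (f' i')))); first by apply: Hglt => //; exact: Hnu.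
  by apply: gle2 => //; exact: Hnu.
have hw : forall w, range f' w -> w <> u -> b <= nu w.
  move=> w Cw wu; have Mw : M w by apply: C'M.
  rewrite leNgt; apply/negP => lt.
  have := mdu _ Cw wu; rewrite Hd //; last by move=> e; apply: wu.
  apply/negP; rewrite -ltNge hu; apply: glt2 => //; exact: Hnu.
have hlev : forall z, M z -> nu z = a -> b = a -> z = c0 \/ z = c1.
  move=> z Mz hz ba; apply: (@Hlev _ _ _ (Mf j0) (Mf j1) Mz) => //.
  by rewrite hz -ba.
have hW : forall w, range f' w -> w <> u -> range f w.
  move=> w Cw wu; have Mw : M w by apply: C'M.
  have bw := hw w Cw wu.
  case: (ltP a (nu w)) => aw; first exact: outside.
  have ew : nu w = a by apply/le_anti; rewrite aw (le_trans ab bw).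
  have ba : b = a by apply/le_anti; rewrite ab -ew bw.
  by case: (hlev w Mw ew ba) => ->; [exists j0|exists j1].
case: (pselect (range f u)) => [[js _ ejs]|nCu].
  have FM := @fin_match T n f f' i js injf'.
  have FM' : forall j, j != js -> exists k, k != i /\ f' k = f j.
    apply: FM => k ki.
    have fku : f' k <> u by move/injf'/eqP; rewrite (negbTE ki).
    have [j _ ej] := hW _ (ex_intro2 _ _ k I erefl) fku.
    exists j; split => //; apply/eqP => ejs'; apply: fku.
    by rewrite -ej ejs' ejs.
  exists id; split.
    by split => //; split => // y My; exists y.
  rewrite image_id; apply/seteqP; split => x.
    case=> k _ <-; case: (eqVneq k i) => [->|ki].
      by exists js.
    by apply: hW; [exists k|move/injf'/eqP; rewrite (negbTE ki)].
  case=> j _ <-; case: (eqVneq j js) => [->|jjs].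
    by exists i.
  by have [k [_ ek]] := FM' j jjs; exists k.
have uc0 : u <> c0 by move=> e; apply: nCu; rewrite e; exists j0.
have hW' : forall w, range f' w -> w <> u -> w <> c0.
  move=> w Cw wu wc; have bw := hw w Cw wu.
  have ba : b = a by apply/le_anti; rewrite ab andbT (_ : a = nu w) // wc.
  by case: (hlev u Mu hu ba) => e; apply: nCu; rewrite e; [exists j0|exists j1].
have FM := @fin_match T n f f' i j0 injf'.
have FM' : forall j, j != j0 -> exists k, k != i /\ f' k = f j.
  apply: FM => k ki.
  have fku : f' k <> u by move/injf'/eqP; rewrite (negbTE ki).
  have Ck : range f' (f' k) by exists k.
  have [j _ ej] := hW _ Ck fku.
  exists j; split => //; apply/eqP => ej0; apply: (hW' _ Ck fku).
  by rewrite -ej ej0.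
have cu : c0 <> u by move=> e; apply: uc0.
have nuswp : forall z, nu (swp c0 u z) = nu z.
  move=> z; have [[-> ->]|[[-> ->]|->]] := swp_cases c0 u z => //.
have Mswp : forall z, M z -> M (swp c0 u z).
  move=> z Mz; have [[_ ->]|[[_ ->]|->]] := swp_cases c0 u z => //.
  exact: Mf.
exists (swp c0 u); split.
  split => //; split.
    by move=> y My; exists (swp c0 u y); [exact: Mswp|exact: swpK].
  move=> x y Mx My; case: (pselect (x = y)) => [<-|xy].
    by rewrite !Hdd //; exact: Mswp.
  rewrite !Hd ?nuswp //; try exact: Mswp.
  by move=> e; apply: xy; rewrite -(swpK c0 u cu x) e swpK.
apply/seteqP; split => x.
  case=> k _ <-; case: (eqVneq k i) => [->|ki].
    by exists c0; [exists j0|rewrite swp_c0].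
  have fku : f' k <> u by move/injf'/eqP; rewrite (negbTE ki).
  have Ck : range f' (f' k) by exists k.
  exists (f' k); first exact: hW.
  by apply: swp_o => //; exact: hW'.
case=> _ [j _ <-] <-; case: (eqVneq j j0) => [->|jj0].
  by rewrite swp_c0; exists i.
have [k [_ ek]] := FM' j jj0.
rewrite swp_o; first by exists k.
  by move/injf/eqP; rewrite (negbTE jj0).
by move=> e; apply: nCu; rewrite -e; exists j.
Qed.
End Abs.

Section Anal.
Variable R : realType.
Variable p : R.
Hypothesis p1 : 1 <= p.

Let p0 : 0 < p. Proof. exact: lt_le_trans p1. Qed.

Lemma sum_single (m j : nat) (A : R) : (j < m)%N ->
  \sum_(i < m) (if (i : nat) == j then A else 0) = A.
Proof.
elim: m => [|m IH] //; rewrite ltnS leq_eqVlt => /orP[/eqP ->|jm].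
  rewrite big_ord_recr /= eqxx big1 ?add0r // => i _.
  by rewrite (ltn_eqF (ltn_ord i)).
rewrite big_ord_recr /= IH // (_ : (m == j) = false) ?addr0 //.
by rewrite eq_sym (ltn_eqF jm).
Qed.

Lemma lpnorm2 (x : seqR R) (j j' : nat) : j != j' ->
  (forall i, i != j -> i != j' -> x i = 0) ->
  lpnorm p x = (`|x j| `^ p + `|x j'| `^ p) `^ p^-1.
Proof.
move=> jj' Hx; rewrite /lpnorm; congr (_ `^ _).
set S := (_ + _ : R).
have H : (fun m : nat => \sum_(i < m) `|x i| `^ p) @ \oo --> S.
  apply: cvg_near_cst; near=> m.
have Hm : (maxn j j' < m)%N by near: m; exists (maxn j j').+1.
rewrite (eq_bigr (fun i : 'I_m => (if (i:nat) == j then `|x j| `^ p else 0)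
   + (if (i:nat) == j' then `|x j'| `^ p else 0))).
  rewrite big_split /= !sum_single //.
  - by apply: leq_ltn_trans Hm; rewrite leq_maxr.
  - by apply: leq_ltn_trans Hm; rewrite leq_maxl.
move=> i _; case: (eqVneq (i:nat) j) => [->|ij].
  by rewrite (negbTE jj') addr0.
case: (eqVneq (i:nat) j') => [->|ij']; first by rewrite add0r.
by rewrite Hx // normr0 powR0 ?addr0 // gt_eqF.
exact: cvg_lim H.
Unshelve. all: by end_near.
Qed.


Definition g (a b : R) : R := (a `^ p + b `^ p) `^ p^-1.
Definition sgl' (j : nat) (c : R) : seqR R := fun i => if i == j then c else 0.
Definition aj (j : nat) : R := ((j./2).+1%:R)^-1.

Lemma aj_gt0 j : 0 < aj j.
Proof. by rewrite /aj invr_gt0 ltr0n. Qed.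

Lemma aj_inj j j' : aj j = aj j' -> j./2 = j'./2.
Proof. by move/invr_inj/eqP; rewrite eqr_nat => /eqP []. Qed.

Lemma zero_sgl j : zeroseq R = sgl' j 0.
Proof. by apply/funext => i; rewrite /sgl'; case: ifP. Qed.

Lemma sgl_norm j c : 0 <= c -> lpnorm p (sgl' j c) = c.
Proof.
move=> c0; have jj : j != j.+1 by rewrite ltn_eqF.
rewrite (@lpnorm2 _ j j.+1) //.
  rewrite /sgl' eqxx (gtn_eqF (ltnSn j)) normr0 powR0 ?gt_eqF // addr0.
  by rewrite ger0_norm // -powRrM mulfV ?gt_eqF // powRr1.
by move=> i ij _; rewrite /sgl' (negbTE ij).
Qed.

Lemma sgl_dist j j' c c' : j != j' -> 0 <= c -> 0 <= c' ->
  lpdist p (sgl' j c) (sgl' j' c') = g c c'.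
Proof.
move=> jj' c0 c'0; rewrite /lpdist (@lpnorm2 _ j j') //.
  rewrite /sgl' !eqxx (negbTE jj') (eq_sym j' j) (negbTE jj') subr0 sub0r normrN.
  by rewrite !ger0_norm.
by move=> i ij ij'; rewrite /sgl' (negbTE ij) (negbTE ij') subr0.
Qed.

Definition sgl j := sgl' j (aj j).

Lemma Mset_cases N x : N `<=` [set k | (0 < k)%N] -> Mset N x ->
  x = zeroseq R \/ exists j, x = sgl j.
Proof.
move=> Npos.
have Hp : forall k, (0 < k)%N -> scaleseq (k%:R^-1) (eplus R k) = sgl (2 * k).-1.-1.
  case=> // k _; apply/funext => i.
  rewrite /scaleseq /eplus /ebasis /sgl /sgl' /aj.
  have -> : (2 * k.+1).-1.-1 = k.*2 by lia.
  by rewrite doubleK; case: ifP; rewrite ?mulr1 ?mulr0.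
have Hm : forall k, (0 < k)%N -> scaleseq (k%:R^-1) (eminus R k) = sgl (2 * k).-1.
  case=> // k _; apply/funext => i.
  rewrite /scaleseq /eminus /ebasis /sgl /sgl' /aj.
  have -> : (2 * k.+1).-1 = (k.*2).+1 by lia.
  rewrite (_ : (k.*2).+1./2 = k); last exact: uphalf_double.
  by case: ifP; rewrite ?mulr1 ?mulr0.
case=> [[[->|[k Nk <-]]|[k Nk <-]]|[k [k0 _] <-]]; first by left.
- by right; exists (2 * k).-1.-1; apply: Hp; apply: Npos.
- by right; exists (2 * k).-1; apply: Hm; apply: Npos.
- by right; exists (2 * k).-1.-1; apply: Hp.
Qed.

Lemma lpnorm_zero : lpnorm p (zeroseq R) = 0.
Proof. by rewrite (zero_sgl 0) sgl_norm. Qed.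

Lemma lpnorm_sgl j : lpnorm p (sgl j) = aj j.
Proof. by rewrite sgl_norm // ltW // aj_gt0. Qed.

Lemma half_odd_eq j j' : j./2 = j'./2 -> odd j = odd j' -> j = j'.
Proof. by move=> h o; rewrite -[j]odd_double_half -[j']odd_double_half h o. Qed.

Lemma g_lt a a' b : 0 <= a -> a < a' -> 0 <= b -> g a b < g a' b.
Proof.
move=> a0 aa' b0; rewrite /g.
have a'0 : 0 <= a' by apply: le_trans (ltW aa').
apply: gt0_ltr_powR; first by rewrite invr_gt0.
- by rewrite nnegrE addr_ge0 // powR_ge0.
- by rewrite nnegrE addr_ge0 // powR_ge0.
by rewrite ltrD2r; apply: gt0_ltr_powR.
Qed.

End Anal.

Theorem lemma4p19 (R : realType) (p : R) (N : set nat) (n : nat) (C : set (seqR R)) :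
  1 <= p ->
  N `<=` [set k | (0 < k)%N] -> N !=set0 ->
  (1 < n)%N ->
  is_code (lpdist p) (Mset N) n C ->
  (forall x c, Mset N x -> ~ C x -> C c -> lpnorm p x <= lpnorm p c) ->
  optimal_code (lpdist p) (Mset N) n C /\
  unique_up_to_isometry (lpdist p) (Mset N) n C.
Proof.
move=> p1 Npos _ n1 code top.
have MC := fun x => @Mset_cases R p p1 N x Npos.
have nz := @lpnorm_zero R p p1.
have ns := @lpnorm_sgl R p p1.
have ajp := @aj_gt0 R.
have nu0 : forall w, Mset N w -> lpnorm p w = 0 -> w = zeroseq R.
  move=> w Mw; case: (MC w Mw) => [//|[j ->]].
  by rewrite ns => e; move: (ajp j); rewrite e ltxx.
have nupos : forall w j, Mset N w -> lpnorm p w = aj R j ->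
    exists jw, w = sgl R jw /\ jw./2 = j./2.
  move=> w j Mw; case: (MC w Mw) => [->|[jw ->]].
    by rewrite nz => e; move: (ajp j); rewrite -e ltxx.
  by rewrite ns => /aj_inj e; exists jw.
apply: (@abs_main R (seqR R) (Mset N) (lpnorm p) (lpdist p) (g R p)); last 3 first.
- exact: n1.
- exact: code.
- exact: top.
- move=> x y Mx My xy.
  case: (MC x Mx) => [ex|[j ex]]; case: (MC y My) => [ey|[j' ey]]; subst x y.
  + by exfalso; apply: xy.
  + rewrite nz ns (zero_sgl R j'.+1) /sgl sgl_dist //; last exact: ltW.
    by rewrite gtn_eqF.
  + rewrite nz ns (zero_sgl R j.+1) /sgl sgl_dist //; last exact: ltW.
    by rewrite ltn_eqF.
  + rewrite !ns /sgl sgl_dist //; try exact: ltW.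
    by apply/eqP => e; apply: xy; rewrite e.
- move=> x _; rewrite /lpdist.
  by have -> : (fun i => x i - x i) = zeroseq R by apply/funext => i; rewrite subrr.
- by move=> x y; exact: powR_ge0.
- by move=> x _; exact: powR_ge0.
- by move=> a b; rewrite /g addrC.
- exact: g_lt.
- move=> x y z Mx My Mz ex ey xy.
case: (MC z Mz) => [ez|[jz ez]]; subst z.
  by exfalso; apply: xy; rewrite nz in ex ey; rewrite (nu0 x Mx ex) (nu0 y My ey).
rewrite ns in ex ey.
have [jx [ex' hx]] := nupos x jz Mx ex; subst x.
have [jy [ey' hy]] := nupos y jz My ey; subst y.
have o2 : odd jx != odd jy.
  by apply/negP => /eqP o; apply: xy; rewrite (@half_odd_eq jx jy) // hx hy.
case: (eqVneq (odd jz) (odd jx)) => o1.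
  by left; rewrite (@half_odd_eq jz jx) // hx.
right; rewrite (@half_odd_eq jz jy) // ?hy //.
by move: o1 o2; case: (odd jz); case: (odd jx); case: (odd jy).
Qed.
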